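(* A finite simple graph $G$ is a linear forest (a disjoint union of paths) if and only if it admits an $LF$-free circular ordering.
   Context: A circular ordering of a finite set is obtained by placing its elements at distinct points of a circle. A circularly ordered graph is a graph with a circular ordering of its vertices; isomorphism means a graph isomorphism preserving circular orderings; induced circularly ordered subgraphs are induced subgraphs with the restricted ordering. A circular ordering $C$ of $V(G)$ is $LF$-free if no induced circularly ordered subgraph of $(G,C)$ is isomorphic to a member of $LF$. $LF$ consists of the following circularly ordered graphs (vertices $v_1,v_2,\dots$ clockwise in this order; the listed edges are all edges): the triangle on $v_1,v_2,v_3$; on $v_1,\dots,v_4$: edges $v_1v_2,v_2v_3,v_3v_4,v_4v_1$ (simple $C_4$); edges $v_1v_2,v_2v_4,v_4v_3,v_3v_1$ (the other circular ordering of $C_4$); edges $v_1v_2,v_2v_3,v_3v_4$ (simple $P_4$); edges $v_3v_1,v_1v_4,v_4v_2$ (crossed $P_4$); edges $v_3v_1,v_3v_2,v_3v_4$ (the claw). *)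

(* Defs.v *)
From mathcomp Require Import all_boot.
Set Implicit Arguments. Unset Strict Implicit. Unset Printing Implicit Defensive.

(* A finite simple graph: vertex set a finType T, edge relation e : rel T,
   assumed symmetric and irreflexive (hypotheses of the theorem). *)

Definition path_adj (T : eqType) (p : seq T) (x y : T) : bool :=
  ((x, y) \in zip p (behead p)) || ((y, x) \in zip p (behead p)).

Definition linear_forest (T : finType) (e : rel T) : Prop :=
  exists ps : seq (seq T),
    [/\ uniq (flatten ps),
        (forall x : T, x \in flatten ps) &
        (forall x y : T, e x y = has (fun p => path_adj p x y) ps)].

(* A circular ordering of T: the vertices listed once each, read clockwise
   around the circle (the sequence is considered up to rotation). *)
Definition circular_ordering (T : finType) (s : seq T) : Prop :=
  uniq s /\ forall x : T, x \in s.

Definition clockwise (T : finType) (s : seq T) (k : nat) (f : 'I_k -> T) : bool :=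
  [exists r : 'I_k.+1, sorted ltn (rot r [seq index (f i) s | i <- enum 'I_k])].

(* Circularly ordered patterns: k vertices v_0..v_{k-1} clockwise, and the
   list of edges (0-indexed). *)
Record pattern := Pattern { pat_size : nat; pat_edges : seq (nat * nat) }.

Definition pat_edge (P : pattern) (i j : nat) : bool :=
  ((i, j) \in pat_edges P) || ((j, i) \in pat_edges P).

Definition contains_pattern (T : finType) (e : rel T) (s : seq T) (P : pattern) : Prop :=
  exists f : 'I_(pat_size P) -> T,
    clockwise s f /\
    forall i j : 'I_(pat_size P), e (f i) (f j) = pat_edge P i j.

(* The family LF (vertices v1,...,vk renamed 0,...,k-1). *)
Definition LF : seq pattern :=
  [:: Pattern 3 [:: (0,1); (1,2); (0,2)]
    ; Pattern 4 [:: (0,1); (1,2); (2,3); (3,0)]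
    ; Pattern 4 [:: (0,1); (1,3); (3,2); (2,0)]
    ; Pattern 4 [:: (0,1); (1,2); (2,3)]
    ; Pattern 4 [:: (2,0); (0,3); (3,1)]
    ; Pattern 4 [:: (2,0); (2,1); (2,3)] ]%N.

Definition LF_free (T : finType) (e : rel T) (s : seq T) : Prop :=
  forall i : nat, i < size LF -> ~ contains_pattern e s (nth (Pattern 0 [::]) LF i).

(* Main.v *)
Require Import Defs.
From mathcomp Require Import all_boot zify.
Set Implicit Arguments. Unset Strict Implicit. Unset Printing Implicit Defensive.


Definition cyc3 (a b c : nat) : Prop :=
  (a < b /\ b < c) \/ (b < c /\ c < a) \/ (c < a /\ a < b).
Definition cyc4 (a b c d : nat) : Prop :=
  (a < b /\ b < c /\ c < d) \/ (b < c /\ c < d /\ d < a) \/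
  (c < d /\ d < a /\ a < b) \/ (d < a /\ a < b /\ b < c).

Lemma cw_map (T : finType) k (f : 'I_k.+1 -> T) (s : seq T) :
  [seq index (f i) s | i <- enum 'I_k.+1] = [seq index (f (inord i)) s | i <- iota 0 k.+1].
Proof. by rewrite -val_enum_ord -map_comp; apply: eq_map => i /=; rewrite inord_val. Qed.

Lemma cw3P (T : finType) (s : seq T) (f : 'I_3 -> T) :
  clockwise s f <-> cyc3 (index (f (inord 0)) s) (index (f (inord 1)) s) (index (f (inord 2)) s).
Proof.
rewrite /clockwise cw_map /= /cyc3; split.
  by move/existsP => [[[|[|[|[|r]]]] Hr]] //= H; lia.
move=> H; apply/existsP.
case: H => [H|[H|H]].
- by exists (Ordinal (isT : 0 < 4)) => /=; lia.
- by exists (Ordinal (isT : 1 < 4)) => /=; lia.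
- by exists (Ordinal (isT : 2 < 4)) => /=; lia.
Qed.

Lemma cw4P (T : finType) (s : seq T) (f : 'I_4 -> T) :
  clockwise s f <-> cyc4 (index (f (inord 0)) s) (index (f (inord 1)) s)
                         (index (f (inord 2)) s) (index (f (inord 3)) s).
Proof.
rewrite /clockwise cw_map /= /cyc4; split.
  by move/existsP => [[[|[|[|[|[|r]]]]] Hr]] //= H; lia.
move=> H; apply/existsP.
case: H => [H|[H|[H|H]]].
- by exists (Ordinal (isT : 0 < 5)) => /=; lia.
- by exists (Ordinal (isT : 1 < 5)) => /=; lia.
- by exists (Ordinal (isT : 2 < 5)) => /=; lia.
- by exists (Ordinal (isT : 3 < 5)) => /=; lia.
Qed.

Definition lab (T : Type) (x0 : T) (l : seq T) k (i : 'I_k) : T := nth x0 l i.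

Lemma lab3 (T : finType) (s : seq T) (a b c : T) :
  cyc3 (index a s) (index b s) (index c s) -> clockwise s (lab a [:: a; b; c] (k:=3)).
Proof. by move=> H; apply/cw3P; rewrite /lab !inordK. Qed.

Lemma lab4 (T : finType) (s : seq T) (x0 a b c d : T) :
  cyc4 (index a s) (index b s) (index c s) (index d s) ->
  clockwise s (lab x0 [:: a; b; c; d] (k:=4)).
Proof. by move=> H; apply/cw4P; rewrite /lab !inordK. Qed.


Ltac cl := unfold cyc4; lia.
Lemma six (a b c d : nat) : a <> b -> a <> c -> a <> d -> b <> c -> b <> d -> c <> d ->
  cyc4 a b c d \/ cyc4 a b d c \/ cyc4 a c b d \/ cyc4 a c d b \/ cyc4 a d b c \/ cyc4 a d c b.
Proof.
move=> *.
case: (ltngtP a b) => ?; case: (ltngtP a c) => ?; case: (ltngtP a d) => ?;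
case: (ltngtP b c) => ?; case: (ltngtP b d) => ?; case: (ltngtP c d) => ?;
first [ left; cl | right; left; cl | do 2 right; left; cl | do 3 right; left; cl
      | do 4 right; left; cl | do 5 right; cl | lia ].
Qed.


Ltac solve_e e_sym e_irr :=
  match goal with
  | |- ?e ?x ?x = false => exact (e_irr x)
  | |- _ = true => first [assumption | rewrite e_sym; assumption]
  | |- _ = false => apply/negbTE; first [assumption | rewrite e_sym; assumption]
  end.

Ltac rhs := match goal with |- _ = ?r => let r' := eval compute in r in change r with r' end.
Ltac pe e_sym e_irr := rewrite /lab; rhs; rewrite /=; solve_e e_sym e_irr.
Ltac edges3 e_sym e_irr := by move=> [[|[|[|i]]] Hi] [[|[|[|j]]] Hj] //=; pe e_sym e_irr.
Ltac edges4 e_sym e_irr := by move=> [[|[|[|[|i]]]] Hi] [[|[|[|[|j]]]] Hj] //=; pe e_sym e_irr.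

Section Back.
Variables (T : finType) (e : rel T) (e_sym : symmetric e) (e_irr : irreflexive e).
Variable s : seq T.
Hypothesis Hs : circular_ordering s.
Hypothesis HLF : LF_free e s.
Local Notation idx x := (index x s).

Lemma idx_inj x y : x != y -> idx x <> idx y.
Proof.
move=> /eqP Hxy Hi; apply: Hxy.
case: Hs => _ Hall.
by rewrite -(nth_index x (Hall x)) Hi nth_index.
Qed.

Lemma no_tri a b c : e a b -> e b c -> e a c -> False.
Proof.
move=> Hab Hbc Hac.
have Hd : forall x y, e x y -> x != y by move=> x y Hxy; apply/eqP=> E; rewrite E e_irr in Hxy.
have := idx_inj (Hd _ _ Hab); have := idx_inj (Hd _ _ Hbc); have := idx_inj (Hd _ _ Hac).
move=> n1 n2 n3.
have : cyc3 (idx a) (idx b) (idx c) \/ cyc3 (idx a) (idx c) (idx b) by rewrite /cyc3; lia.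
case=> Hc.
- apply: (HLF (i:=0) isT); exists (lab a [:: a; b; c] (k:=3)); split; first exact: lab3.
  edges3 e_sym e_irr.
- apply: (HLF (i:=0) isT); exists (lab a [:: a; c; b] (k:=3)); split; first exact: lab3.
  edges3 e_sym e_irr.
Qed.

Lemma edge_neq x y : e x y -> x != y.
Proof. by move=> Hxy; apply/eqP=> E; rewrite E e_irr in Hxy. Qed.

Lemma no_C4 a b c d : a != b -> a != c -> a != d -> b != c -> b != d -> c != d ->
  e a b -> e b c -> e c d -> e d a -> ~~ e a c -> ~~ e b d -> False.
Proof.
move=> d1 d2 d3 d4 d5 d6 Hab Hbc Hcd Hda Nac Nbd.
have := six (idx_inj d1) (idx_inj d2) (idx_inj d3) (idx_inj d4) (idx_inj d5) (idx_inj d6).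
case=> [H|[H|[H|[H|[H|H]]]]].
- apply: (HLF (i:=1) isT); exists (lab a [:: a; b; c; d] (k:=4)); split.
    by apply: lab4; clear -H; move: H; cl.
  edges4 e_sym e_irr.
- apply: (HLF (i:=2) isT); exists (lab a [:: a; b; d; c] (k:=4)); split.
    by apply: lab4; clear -H; move: H; cl.
  edges4 e_sym e_irr.
- apply: (HLF (i:=2) isT); exists (lab a [:: c; b; d; a] (k:=4)); split.
    by apply: lab4; clear -H; move: H; cl.
  edges4 e_sym e_irr.
- apply: (HLF (i:=2) isT); exists (lab a [:: b; a; c; d] (k:=4)); split.
    by apply: lab4; clear -H; move: H; cl.
  edges4 e_sym e_irr.
- apply: (HLF (i:=2) isT); exists (lab a [:: a; d; b; c] (k:=4)); split.
    by apply: lab4; clear -H; move: H; cl.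
  edges4 e_sym e_irr.
- apply: (HLF (i:=1) isT); exists (lab a [:: a; d; c; b] (k:=4)); split.
    by apply: lab4; clear -H; move: H; cl.
  edges4 e_sym e_irr.
Qed.

Lemma no_claw x y1 y2 y3 : y1 != y2 -> y1 != y3 -> y2 != y3 ->
  e x y1 -> e x y2 -> e x y3 -> False.
Proof.
move=> d4 d5 d6 H1 H2 H3.
have d1 := edge_neq H1; have d2 := edge_neq H2; have d3 := edge_neq H3.
have N12 : ~~ e y1 y2.
  by apply/negP=> E; apply: (@no_tri x y1 y2).
have N13 : ~~ e y1 y3.
  by apply/negP=> E; apply: (@no_tri x y1 y3).
have N23 : ~~ e y2 y3.
  by apply/negP=> E; apply: (@no_tri x y2 y3).
have := six (idx_inj d1) (idx_inj d2) (idx_inj d3) (idx_inj d4) (idx_inj d5) (idx_inj d6).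
case=> [H|[H|[H|[H|[H|H]]]]].
- apply: (HLF (i:=5) isT); exists (lab x [:: y2; y3; x; y1] (k:=4)); split.
    by apply: lab4; clear -H; move: H; cl.
  edges4 e_sym e_irr.
- apply: (HLF (i:=5) isT); exists (lab x [:: y3; y2; x; y1] (k:=4)); split.
    by apply: lab4; clear -H; move: H; cl.
  edges4 e_sym e_irr.
- apply: (HLF (i:=5) isT); exists (lab x [:: y1; y3; x; y2] (k:=4)); split.
    by apply: lab4; clear -H; move: H; cl.
  edges4 e_sym e_irr.
- apply: (HLF (i:=5) isT); exists (lab x [:: y3; y1; x; y2] (k:=4)); split.
    by apply: lab4; clear -H; move: H; cl.
  edges4 e_sym e_irr.
- apply: (HLF (i:=5) isT); exists (lab x [:: y1; y2; x; y3] (k:=4)); split.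
    by apply: lab4; clear -H; move: H; cl.
  edges4 e_sym e_irr.
- apply: (HLF (i:=5) isT); exists (lab x [:: y2; y1; x; y3] (k:=4)); split.
    by apply: lab4; clear -H; move: H; cl.
  edges4 e_sym e_irr.
Qed.

Lemma P4sep a b c d : a != b -> a != c -> a != d -> b != c -> b != d -> c != d ->
  e a b -> e b c -> e c d -> ~~ e a c -> ~~ e b d -> ~~ e a d ->
  cyc4 (idx a) (idx b) (idx d) (idx c) \/ cyc4 (idx a) (idx c) (idx d) (idx b).
Proof.
move=> d1 d2 d3 d4 d5 d6 Hab Hbc Hcd Nac Nbd Nad.
have := six (idx_inj d1) (idx_inj d2) (idx_inj d3) (idx_inj d4) (idx_inj d5) (idx_inj d6).
case=> [H|[H|[H|[H|[H|H]]]]]; [ | by left | | by right | | ]; exfalso.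
- apply: (HLF (i:=3) isT); exists (lab a [:: a; b; c; d] (k:=4)); split.
    by apply: lab4; clear -H; move: H; cl.
  edges4 e_sym e_irr.
- apply: (HLF (i:=4) isT); exists (lab a [:: b; d; a; c] (k:=4)); split.
    by apply: lab4; clear -H; move: H; cl.
  edges4 e_sym e_irr.
- apply: (HLF (i:=4) isT); exists (lab a [:: c; a; d; b] (k:=4)); split.
    by apply: lab4; clear -H; move: H; cl.
  edges4 e_sym e_irr.
- apply: (HLF (i:=3) isT); exists (lab a [:: d; c; b; a] (k:=4)); split.
    by apply: lab4; clear -H; move: H; cl.
  edges4 e_sym e_irr.
Qed.

Definition cyc3b (a b c : nat) : bool :=
  [|| (a < b) && (b < c), (b < c) && (c < a) | (c < a) && (a < b)].

Definition arc (A : {set T}) x y := #|[set z in A | cyc3b (idx x) (idx z) (idx y)]|.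

Lemma arc_lt (A : {set T}) x y w z y' : w \in A -> cyc3b (idx x) (idx w) (idx y) ->
  (forall t, cyc3b (idx z) t (idx y') -> cyc3b (idx x) t (idx y)) ->
  ~~ cyc3b (idx z) (idx w) (idx y') ->
  arc A z y' < arc A x y.
Proof.
move=> wA Hw Hsub Nw; apply: proper_card; apply/properP; split.
  by apply/subsetP=> t; rewrite !inE => /andP[-> /Hsub].
by exists w; rewrite !inE ?wA ?Hw // (negbTE Nw).
Qed.

Lemma leaf (A : {set T}) : A != set0 ->
  exists2 v, v \in A & forall a b, a \in A -> b \in A -> e v a -> e v b -> a = b.
Proof.
move=> An0.
pose P := fun p : T * T => [&& p.1 \in A, p.2 \in A & e p.1 p.2].
case: (boolP [exists p, P p]) => [/existsP [p0 Hp0] | Hno]; last first.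
  case/set0Pn: An0 => v vA; exists v => // a b aA _ Hva.
  by exfalso; move/existsP: Hno; apply; exists (v, a); rewrite /P /= vA aA Hva.
case: (arg_minnP (fun p : T * T => arc A p.1 p.2) Hp0) => [[b c]] /and3P [/= bA cA ebc] Hmin.
case: (boolP [exists a, [&& a \in A, a != c & e b a]]) => [/existsP [a /and3P [aA ac eba]] | Ha]; last first.
  exists b => // x y xA yA ebx eby.
  have Ex : x = c by apply/eqP; apply: contraNT Ha => xc; apply/existsP; exists x; rewrite xA xc ebx.
  have Ey : y = c by apply/eqP; apply: contraNT Ha => yc; apply/existsP; exists y; rewrite yA yc eby.
  by rewrite Ex Ey.
case: (boolP [exists d, [&& d \in A, d != b & e c d]]) => [/existsP [d /and3P [dA db ecd]] | Hd]; last first.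
  exists c => // x y xA yA ecx ecy.
  have Ex : x = b by apply/eqP; apply: contraNT Hd => xb; apply/existsP; exists x; rewrite xA xb ecx.
  have Ey : y = b by apply/eqP; apply: contraNT Hd => yb; apply/existsP; exists y; rewrite yA yb ecy.
  by rewrite Ex Ey.
exfalso.
have eab : e a b by rewrite e_sym.
have ab : a != b := edge_neq eab.
have dc : d != c by rewrite eq_sym; exact: edge_neq ecd.
have bc : b != c := edge_neq ebc.
have ad : a != d.
  by apply/eqP=> E; subst d; apply: (@no_tri b c a) => //; rewrite e_sym.
have Nac : ~~ e a c by apply/negP=> E; apply: (@no_tri a b c).
have Nbd : ~~ e b d by apply/negP=> E; apply: (@no_tri b c d).
have Nad : ~~ e a d.
  apply/negP=> E; apply: (@no_C4 a b c d) => //; rewrite 1?eq_sym //.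
  by rewrite e_sym.
have bd : b != d by rewrite eq_sym.
have cd : c != d by rewrite eq_sym.
case: (P4sep ab ac ad bc bd cd eab ebc ecd Nac Nbd Nad) => H.
- have Pdc : P (d, c) by rewrite /P /= dA cA e_sym.
  have := Hmin _ Pdc => /=.
  apply/negP; rewrite -ltnNge.
  apply: (@arc_lt A b c d d c) => //.
  + by clear -H; move: H; rewrite /cyc4 /cyc3b; lia.
  + by move=> t; clear -H; move: H; rewrite /cyc4 /cyc3b; lia.
  + by clear; rewrite /cyc3b; lia.
- have Pba : P (b, a) by rewrite /P /= bA aA eba.
  have := Hmin _ Pba => /=.
  apply/negP; rewrite -ltnNge.
  apply: (@arc_lt A b c a b a) => //.
  + by clear -H; move: H; rewrite /cyc4 /cyc3b; lia.
  + by move=> t; clear -H; move: H; rewrite /cyc4 /cyc3b; lia.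
  + by clear; rewrite /cyc3b; lia.
Qed.
End Back.


Lemma mem_zipT (T : eqType) (s t : seq T) x y : (x, y) \in zip s t -> (x \in s) && (y \in t).
Proof.
elim: s t => [|a s IH] [|b t] //=.
rewrite in_cons => /orP [/eqP [-> ->]|/IH /andP [H1 H2]].
  by rewrite !in_cons !eqxx.
by rewrite !in_cons H1 H2 !orbT.
Qed.

Lemma path_adj_mem (T : eqType) (p : seq T) x y : path_adj p x y -> (x \in p) && (y \in p).
Proof.
rewrite /path_adj => /orP [] /mem_zipT /andP [H1 /mem_behead H2]; by rewrite H1 H2.
Qed.

Lemma path_adj_sym (T : eqType) (p : seq T) x y : path_adj p x y = path_adj p y x.
Proof. by rewrite /path_adj orbC. Qed.

Lemma path_adj_cons2 (T : eqType) (v u : T) r x y :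
  path_adj [:: v, u & r] x y =
  [|| path_adj (u :: r) x y, (x == v) && (y == u) | (x == u) && (y == v)].
Proof.
rewrite /path_adj /= !in_cons !xpair_eqE.
by case: (x == v); case: (y == u); case: (x == u); case: (y == v);
  case: ((x, y) \in _); case: ((y, x) \in _).
Qed.

Lemma zip_rcons2 (T : eqType) (w : seq T) a v :
  zip (rcons (a :: w) v) (behead (rcons (a :: w) v)) =
  rcons (zip (a :: w) (behead (a :: w))) (last a w, v).
Proof.
elim: w a => [|b w IH] a //=.
by have := IH b => /= ->.
Qed.

Lemma path_adj_rcons (T : eqType) (q : seq T) u v x y :
  path_adj (rcons (rcons q u) v) x y =
  [|| path_adj (rcons q u) x y, (x == v) && (y == u) | (x == u) && (y == v)].
Proof.
case: q => [|a q].
  rewrite /path_adj /= !in_cons !xpair_eqE /=.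
  by case: (x == v); case: (y == u); case: (x == u); case: (y == v).
rewrite /path_adj.
rewrite [rcons (rcons _ u) v]/= -rcons_cons zip_rcons2 !mem_rcons !in_cons !xpair_eqE last_rcons.
by case: (x == v); case: (y == u); case: (x == u); case: (y == v);
  case: ((x, y) \in _); case: ((y, x) \in _).
Qed.

Lemma path_adj_nth (T : eqType) (q : seq T) x0 i :
  i.+1 < size q -> path_adj q (nth x0 q i) (nth x0 q i.+1).
Proof.
move=> Hi; rewrite /path_adj; apply/orP; left.
have <- : nth (x0, x0) (zip q (behead q)) i = (nth x0 q i, nth x0 q i.+1).
  by rewrite nth_zip_cond size_zip size_behead; case: ifP => [_|]; [rewrite nth_behead | lia].
by apply: mem_nth; rewrite size_zip size_behead; lia.
Qed.

Section Build.
Variables (T : finType) (e : rel T) (e_sym : symmetric e) (e_irr : irreflexive e).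

Definition LFon (A : {set T}) ps :=
  [/\ uniq (flatten ps), (forall x, (x \in flatten ps) = (x \in A)) &
      (forall x y, x \in A -> y \in A -> e x y = has (fun p => path_adj p x y) ps)].

Lemma attach (A : {set T}) (v u : T) (ps1 : seq (seq T)) (q : seq T) ps2 (q' : seq T) : v \in A -> u \in A :\ v -> e v u ->
  (forall y, y \in A -> e v y -> y = u) ->
  LFon (A :\ v) (ps1 ++ q :: ps2) -> perm_eq q' (v :: q) ->
  (forall x y, path_adj q' x y = [|| path_adj q x y, (x == v) && (y == u) | (x == u) && (y == v)]) ->
  LFon A (ps1 ++ q' :: ps2).
Proof.
move=> vA uA' evu Hleaf [Hu Hm He] Hp Hadj.
have vnot : v \notin flatten (ps1 ++ q :: ps2) by rewrite Hm !inE eqxx.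
have uv : u != v by move: uA'; rewrite !inE => /andP [].
have Hfl : perm_eq (flatten (ps1 ++ q' :: ps2)) (v :: flatten (ps1 ++ q :: ps2)).
  rewrite !flatten_cat /=.
  apply: (@perm_trans _ (flatten ps1 ++ (v :: q) ++ flatten ps2)).
    by rewrite perm_cat2l perm_cat2r.
  by rewrite /= -cat1s perm_catCA.
have Hnv : forall p y, p \in ps1 ++ q :: ps2 -> path_adj p v y = false.
  move=> p y pin; apply/negP => /path_adj_mem /andP [H _]; move/negP: vnot; apply.
  by apply/flattenP; exists p.
have Hnv' : forall p y, p \in ps1 ++ q :: ps2 -> path_adj p y v = false.
  by move=> p y pin; rewrite path_adj_sym Hnv.
have H1 : forall y, has (fun p => path_adj p v y) ps1 = false.
  by move=> y; apply/hasPn => p pin; rewrite Hnv // mem_cat pin.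
have H1' : forall y, has (fun p => path_adj p y v) ps1 = false.
  by move=> y; apply/hasPn => p pin; rewrite Hnv' // mem_cat pin.
have H2 : forall y, has (fun p => path_adj p v y) ps2 = false.
  by move=> y; apply/hasPn => p pin; rewrite Hnv // mem_cat in_cons pin !orbT.
have H2' : forall y, has (fun p => path_adj p y v) ps2 = false.
  by move=> y; apply/hasPn => p pin; rewrite Hnv' // mem_cat in_cons pin !orbT.
have Hq : forall y, path_adj q v y = false.
  by move=> y; rewrite Hnv // mem_cat in_cons eqxx orbT.
have Hq' : forall y, path_adj q y v = false.
  by move=> y; rewrite Hnv' // mem_cat in_cons eqxx orbT.
split.
- by rewrite (perm_uniq Hfl) /= vnot Hu.
- by move=> x; rewrite (perm_mem Hfl) in_cons Hm !inE; case: eqP => // ->.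
move=> x y xA yA; rewrite !has_cat /= Hadj.
case: (x =P v) => [Ex|nx]; case: (y =P v) => [Ey|ny].
- subst x y; rewrite e_irr H1 H2 Hq /= ?eqxx.
  by rewrite eq_sym (negbTE uv).
- subst x; rewrite H1 H2 Hq /= ?eqxx /=.
  rewrite andbF !orbF.
  apply/idP/eqP => [/(Hleaf y yA) //| ->]; exact: evu.
- subst y; rewrite H1' H2' Hq' /= ?eqxx /=.
  rewrite andbT orbF e_sym.
  apply/idP/eqP => [/(Hleaf x xA) //| ->]; exact: evu.
- rewrite /= ?andbF !orbF.
  have xA' : x \in A :\ v by rewrite !inE xA andbT; apply/eqP.
  have yA' : y \in A :\ v by rewrite !inE yA andbT; apply/eqP.
  by rewrite (He x y xA' yA') has_cat /=.
Qed.
End Build.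

Lemma head_index (T : eqType) (q : seq T) u : index u q = 0 -> u \in q -> q = u :: behead q.
Proof. by case: q => [//|a r] /=; case: eqP => [-> //|_ //]. Qed.

Lemma last_index (T : eqType) (q : seq T) u : u \in q -> index u q = (size q).-1 ->
  exists r, q = rcons r u.
Proof.
case/lastP: q => [//|r a]; rewrite size_rcons /= mem_rcons in_cons => /orP [/eqP->|ur] Hi.
  by exists r.
exfalso; move: Hi; rewrite -cats1 index_cat ur.
have := index_mem u r; rewrite ur; lia.
Qed.

Section Build2.
Variables (T : finType) (e : rel T) (e_sym : symmetric e) (e_irr : irreflexive e).
Variable s : seq T.
Hypothesis Hs : circular_ordering s.
Hypothesis HLF : LF_free e s.

Lemma isolated (A : {set T}) v ps : v \in A -> (forall y, y \in A -> e v y = false) ->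
  LFon e (A :\ v) ps -> LFon e A ([:: v] :: ps).
Proof.
move=> vA Hno [Hu Hm He].
have vnot : v \notin flatten ps by rewrite Hm !inE eqxx.
have Hnv : forall y, has (fun p => path_adj p v y) ps = false.
  move=> y; apply/hasPn => p pin; apply/negP => /path_adj_mem /andP [H _].
  by move/negP: vnot; apply; apply/flattenP; exists p.
have Hnv' : forall y, has (fun p => path_adj p y v) ps = false.
  by move=> y; rewrite -(Hnv y); apply: eq_has => p; rewrite path_adj_sym.
split.
- by rewrite /= vnot Hu.
- by move=> x; rewrite /= in_cons Hm !inE; case: eqP => // ->.
move=> x y xA yA; rewrite /= {1}/path_adj /=.
case: (x =P v) => [->|nx]; first by rewrite Hnv Hno.
case: (y =P v) => [->|ny]; first by rewrite Hnv' e_sym Hno.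
have xA' : x \in A :\ v by rewrite !inE xA andbT; apply/eqP.
have yA' : y \in A :\ v by rewrite !inE yA andbT; apply/eqP.
by rewrite He.
Qed.

Lemma build n : forall A : {set T}, #|A| = n -> exists ps, LFon e A ps.
Proof.
elim: n => [|n IH] A HA.
  exists [::]; rewrite (cards0_eq HA); split => // x; rewrite inE //.
have An0 : A != set0 by apply/eqP => E; move: HA; rewrite E cards0.
case: (leaf e_sym e_irr Hs HLF An0) => v vA Hlf.
have HA' : #|A :\ v| = n by move: HA; rewrite (cardsD1 v A) vA; lia.
case: (IH _ HA') => ps' Hps'.
case: (boolP [exists u in A :\ v, e v u]) => [/existsP [u /andP [uA' evu]] | Hno]; last first.
  exists ([:: v] :: ps'); apply: isolated => // y yA.
  apply/negP => evy; move/existsP: Hno; apply.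
  exists y; rewrite evy andbT !inE yA andbT; apply/eqP => E; subst y.
  by rewrite e_irr in evy.
have uA : u \in A by move: uA'; rewrite !inE => /andP [].
have Hleaf : forall y, y \in A -> e v y -> y = u by move=> y yA evy; apply: (Hlf y u).
case: (Hps') => Hu Hm He.
have : u \in flatten ps' by rewrite Hm.
case/flattenP => q qin uq.
move: Hps' Hu Hm He; case/splitPr: qin => ps1 ps2 Hps' Hu Hm He.
have uq' : uniq q by move: Hu; rewrite flatten_cat /= !cat_uniq => /and3P [_ _ /andP [] ].
set i := index u q.
have ui : i < size q by rewrite index_mem.
have HnA : forall w, w \in q -> w \in A :\ v.
  by move=> w wq; rewrite -Hm flatten_cat mem_cat /= mem_cat wq orbT.
have Hadjq : forall w, path_adj q u w -> e u w.
  move=> w Hw; have /andP [_ wq] := path_adj_mem Hw.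
  by rewrite (He u w uA' (HnA w wq)) has_cat /= Hw orbT.
have Hend : i = 0 \/ i = (size q).-1.
  case: (posnP i) => [->|ipos]; first by left.
  right; case: (ltngtP i.+1 (size q)) => [lt|gt|eq]; [exfalso | lia | lia].
  have e1 : e u (nth u q i.-1).
    apply: Hadjq; rewrite path_adj_sym.
    have := @path_adj_nth _ q u i.-1; rewrite prednK // nth_index //; apply; lia.
  have e2 : e u (nth u q i.+1).
    apply: Hadjq; have := @path_adj_nth _ q u i lt; rewrite nth_index //.
  have w1A : nth u q i.-1 \in A :\ v by apply: HnA; apply: mem_nth; lia.
  have w2A : nth u q i.+1 \in A :\ v by apply: HnA; apply: mem_nth; lia.
  apply: (no_claw e_sym e_irr Hs HLF (x:=u) (y1:=v) _ _ _ _ e1 e2).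
  - by apply/eqP => E; move: w1A; rewrite -E !inE eqxx.
  - by apply/eqP => E; move: w2A; rewrite -E !inE eqxx.
  - by rewrite nth_uniq //; lia.
  - by rewrite e_sym.
have HL : LFon e (A :\ v) (ps1 ++ q :: ps2) by split.
case: Hend => Hi.
  have Eq := head_index Hi uq; set r := behead q in Eq.
  exists (ps1 ++ (v :: q) :: ps2).
  apply: (attach e_sym e_irr vA uA' evu Hleaf HL) => //.
  by move=> x y; rewrite {1}Eq path_adj_cons2 -Eq.
case: (last_index uq Hi) => r Er.
exists (ps1 ++ (rcons q v) :: ps2).
apply: (attach e_sym e_irr vA uA' evu Hleaf HL).
  by rewrite perm_rcons.
by move=> x y; rewrite Er path_adj_rcons.
Qed.
End Build2.


Definition zpos (L k : nat) : nat := if k %% 2 == 0 then k %/ 2 else L - 1 - k %/ 2.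

Lemma zposE L k : (k %% 2 = 0 /\ zpos L k = k %/ 2) \/ (k %% 2 = 1 /\ zpos L k = L - 1 - k %/ 2).
Proof. rewrite /zpos; case: eqP => H; [left | right]; split => //; lia. Qed.

Lemma zpos_even L t : zpos L (2 * t) = t.
Proof. rewrite /zpos; case: ifP => H; lia. Qed.
Lemma zpos_odd L t : zpos L (2 * t + 1) = L - 1 - t.
Proof. rewrite /zpos; case: ifP => H; lia. Qed.

Lemma zpos_val L k t : (k = 2 * t -> zpos L k = t) /\ (k = 2 * t + 1 -> zpos L k = L - 1 - t).
Proof. by split=> ->; rewrite ?zpos_even ?zpos_odd. Qed.

Lemma P4_contra L O k0 k1 k2 k3 :
  k0 < L -> k1 < L -> k2 < L -> k3 < L ->
  (k1 = k0.+1 \/ k0 = k1.+1) -> (k2 = k1.+1 \/ k1 = k2.+1) -> (k3 = k2.+1 \/ k2 = k3.+1) ->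
  k0 <> k2 -> k1 <> k3 ->
  cyc4 (O + zpos L k0) (O + zpos L k1) (O + zpos L k2) (O + zpos L k3) \/
  cyc4 (O + zpos L k1) (O + zpos L k3) (O + zpos L k0) (O + zpos L k2) -> False.
Proof.
move=> h0 h1 h2 h3 h4 h5 h6 h7 h8 H.
have [m Hm] : exists m, (k0 = m /\ k1 = m + 1 /\ k2 = m + 2 /\ k3 = m + 3) \/
                        (k3 = m /\ k2 = m + 1 /\ k1 = m + 2 /\ k0 = m + 3).
  case: h4 => E.
    by exists k0; left; lia.
  by exists k3; right; lia.
have [t Ht] : exists t, m = 2 * t \/ m = 2 * t + 1.
  by exists (m %/ 2); lia.
move: H.
case: Hm => [[E0 [E1 [E2 E3]]] | [E0 [E1 [E2 E3]]]]; case: Ht => Em.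
- rewrite (proj1 (zpos_val L k0 t)); last lia.
  rewrite (proj2 (zpos_val L k1 t)); last lia.
  rewrite (proj1 (zpos_val L k2 t.+1)); last lia.
  rewrite (proj2 (zpos_val L k3 t.+1)); last lia.
  rewrite /cyc4; lia.
- rewrite (proj2 (zpos_val L k0 t)); last lia.
  rewrite (proj1 (zpos_val L k1 t.+1)); last lia.
  rewrite (proj2 (zpos_val L k2 t.+1)); last lia.
  rewrite (proj1 (zpos_val L k3 t.+2)); last lia.
  rewrite /cyc4; lia.
- rewrite (proj1 (zpos_val L k3 t)); last lia.
  rewrite (proj2 (zpos_val L k2 t)); last lia.
  rewrite (proj1 (zpos_val L k1 t.+1)); last lia.
  rewrite (proj2 (zpos_val L k0 t.+1)); last lia.
  rewrite /cyc4; lia.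
- rewrite (proj2 (zpos_val L k3 t)); last lia.
  rewrite (proj1 (zpos_val L k2 t.+1)); last lia.
  rewrite (proj2 (zpos_val L k1 t.+1)); last lia.
  rewrite (proj1 (zpos_val L k0 t.+2)); last lia.
  rewrite /cyc4; lia.
Qed.

Section Abs.
Variables (T : finType) (e : rel T) (s : seq T).
Variables (pi K : T -> nat) (L O : nat -> nat).
Hypothesis Hedge : forall x y, e x y <-> (pi x = pi y /\ (K y = (K x).+1 \/ K x = (K y).+1)).
Hypothesis Hinj : forall x y, pi x = pi y -> K x = K y -> x = y.
Hypothesis Hidx : forall x, index x s = O (pi x) + zpos (L (pi x)) (K x).
Hypothesis HK : forall x, K x < L (pi x).

Lemma Kneq x y : pi x = pi y -> index x s <> index y s -> K x <> K y.
Proof. by move=> Hp Hi Hk; apply: Hi; rewrite (Hinj Hp Hk). Qed.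

Lemma LFfree_abs : LF_free e s.
Proof.
move=> i Hi [f [Hcw Hf]].
case: i Hi f Hcw Hf => [|[|[|[|[|[|i]]]]]] //= _ f Hcw Hf.
- move/cw3P: Hcw => _.
  have E01 : e (f (inord 0)) (f (inord 1)) by rewrite Hf !inordK.
  have E12 : e (f (inord 1)) (f (inord 2)) by rewrite Hf !inordK.
  have E02 : e (f (inord 0)) (f (inord 2)) by rewrite Hf !inordK.
  have [_ K01] := proj1 (Hedge _ _) E01.
  have [_ K12] := proj1 (Hedge _ _) E12.
  have [_ K02] := proj1 (Hedge _ _) E02.
  lia.
- move/cw4P: Hcw => Hcw.
  have E01 : e (f (inord 0)) (f (inord 1)) by rewrite Hf !inordK.
  have E12 : e (f (inord 1)) (f (inord 2)) by rewrite Hf !inordK.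
  have E23 : e (f (inord 2)) (f (inord 3)) by rewrite Hf !inordK.
  have E30 : e (f (inord 3)) (f (inord 0)) by rewrite Hf !inordK.
  have [P01 K01] := proj1 (Hedge _ _) E01.
  have [P12 K12] := proj1 (Hedge _ _) E12.
  have [P23 K23] := proj1 (Hedge _ _) E23.
  have [P30 K30] := proj1 (Hedge _ _) E30.
  have D02 : K (f (inord 0)) <> K (f (inord 2)).
    apply: Kneq; first by rewrite P01 P12.
    by clear -Hcw; move: Hcw; rewrite /cyc4; lia.
  have D13 : K (f (inord 1)) <> K (f (inord 3)).
    apply: Kneq; first by rewrite P12 P23.
    by clear -Hcw; move: Hcw; rewrite /cyc4; lia.
  lia.
- move/cw4P: Hcw => Hcw.
  have E01 : e (f (inord 0)) (f (inord 1)) by rewrite Hf !inordK.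
  have E13 : e (f (inord 1)) (f (inord 3)) by rewrite Hf !inordK.
  have E32 : e (f (inord 3)) (f (inord 2)) by rewrite Hf !inordK.
  have E20 : e (f (inord 2)) (f (inord 0)) by rewrite Hf !inordK.
  have [P01 K01] := proj1 (Hedge _ _) E01.
  have [P13 K13] := proj1 (Hedge _ _) E13.
  have [P32 K32] := proj1 (Hedge _ _) E32.
  have [P20 K20] := proj1 (Hedge _ _) E20.
  have D03 : K (f (inord 0)) <> K (f (inord 3)).
    apply: Kneq; first by rewrite P01 P13.
    by clear -Hcw; move: Hcw; rewrite /cyc4; lia.
  have D12 : K (f (inord 1)) <> K (f (inord 2)).
    apply: Kneq; first by rewrite P13 P32.
    by clear -Hcw; move: Hcw; rewrite /cyc4; lia.
  lia.
- move/cw4P: Hcw => Hcw.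
  have E01 : e (f (inord 0)) (f (inord 1)) by rewrite Hf !inordK.
  have E12 : e (f (inord 1)) (f (inord 2)) by rewrite Hf !inordK.
  have E23 : e (f (inord 2)) (f (inord 3)) by rewrite Hf !inordK.
  have [P01 K01] := proj1 (Hedge _ _) E01.
  have [P12 K12] := proj1 (Hedge _ _) E12.
  have [P23 K23] := proj1 (Hedge _ _) E23.
  have D02 : K (f (inord 0)) <> K (f (inord 2)).
    apply: Kneq; first by rewrite P01 P12.
    by clear -Hcw; move: Hcw; rewrite /cyc4; lia.
  have D13 : K (f (inord 1)) <> K (f (inord 3)).
    apply: Kneq; first by rewrite P12 P23.
    by clear -Hcw; move: Hcw; rewrite /cyc4; lia.
  move: Hcw; rewrite !Hidx -P23 -P12 -P01 => Hcw.
  have H0 := HK (f (inord 0)).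
  have H1 := HK (f (inord 1)); rewrite -P01 in H1.
  have H2 := HK (f (inord 2)); rewrite -P12 -P01 in H2.
  have H3 := HK (f (inord 3)); rewrite -P23 -P12 -P01 in H3.
  by apply: (@P4_contra (L (pi (f (inord 0)))) (O (pi (f (inord 0))))
     (K (f (inord 0))) (K (f (inord 1))) (K (f (inord 2))) (K (f (inord 3)))) => //; left.
- move/cw4P: Hcw => Hcw.
  have E20 : e (f (inord 2)) (f (inord 0)) by rewrite Hf !inordK.
  have E03 : e (f (inord 0)) (f (inord 3)) by rewrite Hf !inordK.
  have E31 : e (f (inord 3)) (f (inord 1)) by rewrite Hf !inordK.
  have [P20 K20] := proj1 (Hedge _ _) E20.
  have [P03 K03] := proj1 (Hedge _ _) E03.
  have [P31 K31] := proj1 (Hedge _ _) E31.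
  have D23 : K (f (inord 2)) <> K (f (inord 3)).
    apply: Kneq; first by rewrite P20 P03.
    by clear -Hcw; move: Hcw; rewrite /cyc4; lia.
  have D01 : K (f (inord 0)) <> K (f (inord 1)).
    apply: Kneq; first by rewrite P03 P31.
    by clear -Hcw; move: Hcw; rewrite /cyc4; lia.
  move: Hcw; rewrite !Hidx -P31 -P03 -P20 => Hcw.
  have H2 := HK (f (inord 2)).
  have H0 := HK (f (inord 0)); rewrite -P20 in H0.
  have H3 := HK (f (inord 3)); rewrite -P03 -P20 in H3.
  have H1 := HK (f (inord 1)); rewrite -P31 -P03 -P20 in H1.
  by apply: (@P4_contra (L (pi (f (inord 2)))) (O (pi (f (inord 2))))
     (K (f (inord 2))) (K (f (inord 0))) (K (f (inord 3))) (K (f (inord 1)))) => //; right.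
- move/cw4P: Hcw => Hcw.
  have E20 : e (f (inord 2)) (f (inord 0)) by rewrite Hf !inordK.
  have E21 : e (f (inord 2)) (f (inord 1)) by rewrite Hf !inordK.
  have E23 : e (f (inord 2)) (f (inord 3)) by rewrite Hf !inordK.
  have [P20 K20] := proj1 (Hedge _ _) E20.
  have [P21 K21] := proj1 (Hedge _ _) E21.
  have [P23 K23] := proj1 (Hedge _ _) E23.
  have D01 : K (f (inord 0)) <> K (f (inord 1)).
    apply: Kneq; first by rewrite -P20 P21.
    by clear -Hcw; move: Hcw; rewrite /cyc4; lia.
  have D03 : K (f (inord 0)) <> K (f (inord 3)).
    apply: Kneq; first by rewrite -P20 P23.
    by clear -Hcw; move: Hcw; rewrite /cyc4; lia.
  have D13 : K (f (inord 1)) <> K (f (inord 3)).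
    apply: Kneq; first by rewrite -P21 P23.
    by clear -Hcw; move: Hcw; rewrite /cyc4; lia.
  lia.
Qed.
End Abs.


Fixpoint zz (T : Type) (p : seq T) : seq T :=
  if p is x :: p' then x :: rev (zz p') else [::].

Lemma size_zz (T : Type) (p : seq T) : size (zz p) = size p.
Proof. by elim: p => //= x p IH; rewrite size_rev IH. Qed.

Lemma zz_perm (T : eqType) (p : seq T) : perm_eq (zz p) p.
Proof. by elim: p => //= x p IH; rewrite perm_cons perm_rev. Qed.

Lemma zpos_lt L k : k < L -> zpos L k < L.
Proof. rewrite /zpos; case: ifP => _; lia. Qed.

Lemma zposS L k : k < L -> zpos L.+1 k.+1 = L - zpos L k.
Proof. rewrite /zpos; case: ifP => H1; case: ifP => H2; lia. Qed.

Lemma zz_nth (T : Type) (p : seq T) x0 k : k < size p ->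
  nth x0 (zz p) (zpos (size p) k) = nth x0 p k.
Proof.
elim: p k => [|x p IH] [|k] //=; rewrite ltnS => Hk.
have Hz := zpos_lt Hk.
rewrite zposS //.
case E: (size p - zpos (size p) k) => [|m]; first lia.
rewrite /= nth_rev; last by rewrite size_zz; lia.
rewrite size_zz (_ : size p - m.+1 = zpos (size p) k); last lia.
exact: IH.
Qed.

Lemma zz_index (T : eqType) (p : seq T) x : uniq p -> x \in p ->
  index x (zz p) = zpos (size p) (index x p).
Proof.
move=> Hu xp.
have Hk : index x p < size p by rewrite index_mem.
rewrite -{1}(nth_index x xp) -(zz_nth x Hk) index_uniq //.
  by rewrite size_zz; apply: zpos_lt.
by rewrite (perm_uniq (zz_perm p)).
Qed.

Lemma flatten_zz_perm (T : eqType) (ps : seq (seq T)) :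
  perm_eq (flatten (map (@zz T) ps)) (flatten ps).
Proof. by elim: ps => //= p ps IH; apply: perm_cat => //; apply: zz_perm. Qed.

Lemma uniq_in_flatten (T : eqType) (ps : seq (seq T)) p :
  uniq (flatten ps) -> p \in ps -> uniq p.
Proof.
elim: ps => //= q ps IH; rewrite cat_uniq in_cons => /and3P [Hq _ Hu] /orP [/eqP ->|] //.
exact: IH.
Qed.

Lemma find_nth (T : eqType) (ps : seq (seq T)) j y : uniq (flatten ps) ->
  j < size ps -> y \in nth [::] ps j -> find (fun p => y \in p) ps = j.
Proof.
elim: ps j => [|q ps IH] [|j] //= Hu Hj Hy; first by rewrite Hy.
move: Hu; rewrite cat_uniq => /and3P [_ Hdis Hu].
have -> : (y \in q) = false.
  apply/negP => yq.
  have yf : y \in flatten ps.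
    by apply/flattenP; exists (nth [::] ps j) => //; apply: mem_nth.
  by move: (hasPn Hdis y yf); rewrite yq.
by rewrite (IH j).

Qed.

Lemma path_adj_idx (T : eqType) (p : seq T) x y : uniq p -> path_adj p x y ->
  [/\ x \in p, y \in p & (index y p = (index x p).+1 \/ index x p = (index y p).+1)].
Proof.
move=> Hu Hadj; have /andP [xp yp] := path_adj_mem Hadj; split => //.
have key : forall a b, (a, b) \in zip p (behead p) -> index b p = (index a p).+1.
  move=> a b /(nthP (a, a)) [i]; rewrite size_zip size_behead => Hi.
  rewrite nth_zip_cond size_zip size_behead Hi nth_behead => [[<- <-]].
  rewrite !index_uniq //; lia.
by case/orP: Hadj => /key; [left|right].
Qed.

Definition Opos (T : Type) (ps : seq (seq T)) j := sumn (map size (take j ps)).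

Lemma idx_flat (T : eqType) (ps : seq (seq T)) x : uniq (flatten ps) -> x \in flatten ps ->
  let j := find (fun p => x \in p) ps in
  index x (flatten (map (@zz T) ps)) =
  Opos ps j + zpos (size (nth [::] ps j)) (index x (nth [::] ps j)).
Proof.
elim: ps => [|q ps IH] //= Hu.
move: (Hu); rewrite cat_uniq => /and3P [Hq _ Hu'].
rewrite mem_cat index_cat (perm_mem (zz_perm q)).
case: ifP => xq /=.
  by rewrite /Opos /= (zz_index Hq xq).
move=> xf; rewrite (IH Hu' xf) /Opos /= size_zz addnA.
by [].
Qed.

Lemma forward (T : finType) (e : rel T) :
  linear_forest e -> exists s : seq T, circular_ordering s /\ LF_free e s.
Proof.
case=> ps [Hu Hall He].
pose pi := fun x => find (fun p => x \in p) ps.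
pose K := fun x => index x (nth [::] ps (pi x)).
pose L := fun j => size (nth [::] ps j).
pose O := Opos ps.
have Hpi : forall x, pi x < size ps /\ x \in nth [::] ps (pi x).
  move=> x; have /flattenP [p pin xp] := Hall x.
  have Hh : has (fun p => x \in p) ps by apply/hasP; exists p.
  by split; [rewrite -has_find | apply: (nth_find [::] Hh)].
have Hun : forall j, j < size ps -> uniq (nth [::] ps j).
  by move=> j Hj; apply: (uniq_in_flatten Hu); apply: mem_nth.
exists (flatten (map (@zz T) ps)); split.
  split; first by rewrite (perm_uniq (flatten_zz_perm ps)).
  by move=> x; rewrite (perm_mem (flatten_zz_perm ps)).
apply: (@LFfree_abs _ _ _ pi K L O).
- move=> x y; rewrite He; split.
    case/hasP => p pin Hadj.
    have Ep := nth_index [::] pin.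
    have Hj : index p ps < size ps by rewrite index_mem.
    have Hup : uniq p by apply: (uniq_in_flatten Hu).
    case: (path_adj_idx Hup Hadj) => xp yp Hk.
    have Px : pi x = index p ps by apply: find_nth => //; rewrite Ep.
    have Py : pi y = index p ps by apply: find_nth => //; rewrite Ep.
    by split; [rewrite Px Py | rewrite /K Px Py Ep].
  move=> [Pxy Hk]; apply/hasP; exists (nth [::] ps (pi x)).
    by apply: mem_nth; case: (Hpi x).
  have [Hx xp] := Hpi x; have [_ yp] := Hpi y; rewrite -Pxy in yp.
  have Hup := Hun _ Hx.
  move: Hk; rewrite /K -Pxy => -[Hk|Hk].
    have := @path_adj_nth _ (nth [::] ps (pi x)) x (index x (nth [::] ps (pi x))).
    rewrite nth_index // -Hk nth_index //; apply; by rewrite index_mem.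
  rewrite path_adj_sym.
  have := @path_adj_nth _ (nth [::] ps (pi x)) y (index y (nth [::] ps (pi x))).
  rewrite nth_index // -Hk nth_index //; apply; by rewrite index_mem.
- move=> x y Pxy Kxy.
  have [_ xp] := Hpi x; have [_ yp] := Hpi y; rewrite -Pxy in yp.
  move: Kxy; rewrite /K -Pxy => Kxy.
  by rewrite -[LHS](nth_index x xp) Kxy nth_index.
- by move=> x; rewrite (idx_flat Hu (Hall x)).
- by move=> x; rewrite /K /L index_mem; case: (Hpi x).
Qed.


Theorem proposition5 (T : finType) (e : rel T)
  (e_sym : symmetric e) (e_irr : irreflexive e) :
  linear_forest e <-> exists s : seq T, circular_ordering s /\ LF_free e s.
Proof.
split; first exact: forward.
case=> s [Hs HLF].
have [ps [Hu Hm He]] := build e_sym e_irr Hs HLF (erefl #|[set: T]|).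
exists ps; split => // [x | x y]; first by rewrite Hm inE.
by rewrite He ?inE.
Qed.
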